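(* Let $X$ be a proper geodesic metric space. If $X$ is Morse-dichotomous, then $\partial_* X$ is strongly $\sigma$-compact.
   Context: A Morse gauge is a non-decreasing continuous $M:\mathbb{R}_{\ge1}\to\mathbb{R}_{\ge0}$; a quasi-geodesic $\gamma$ is $M$--Morse if every $Q$--quasi-geodesic with endpoints $\gamma(s),\gamma(t)$ lies in the closed $M(Q)$--neighbourhood of $\gamma[s,t]$. A geodesic $\gamma$ is $C$--contracting if for every $x\in X$ the closest-point projection to $\gamma$ of the ball $B_{d(x,\gamma)}(x)$ has diameter at most $C$. $X$ is Morse-dichotomous if the converse of ''contracting implies Morse'' holds: for every Morse gauge $M$ there is $C$ such that every $M$--Morse geodesic is $C$--contracting. With basepoint $x_0$, $\partial_*X$ is the set of Morse geodesic rays from $x_0$ up to bounded Hausdorff distance, and $\partial^M_{x_0}X$ the subset represented by $M$--Morse rays from $x_0$. $\partial_*X$ is strongly $\sigma$-compact if there is an increasing sequence of Morse gauges $(M_n)$ with $\partial_*X=\bigcup_n\partial^{M_n}_{x_0}X$ such that for every Morse gauge $M$ there is $n$ with $\partial^M_{x_0}X\subset\partial^{M_n}_{x_0}X$. *)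

(* Defs.v *)
From HB Require Import structures.
From mathcomp Require Import all_boot all_order all_algebra.
From mathcomp Require Import all_classical all_reals all_analysis.
Set Implicit Arguments. Unset Strict Implicit. Unset Printing Implicit Defensive.
Import Order.TTheory GRing.Theory Num.Theory.
Import numFieldNormedType.Exports.
Local Open Scope classical_set_scope.
Local Open Scope ring_scope.

Section MorseDefs.
Context {R : realType} {X : metricType R}.
Local Notation d := (@mdist R X).

Definition proper_space : Prop :=
  forall (x : X) (r : R), compact [set y | d x y <= r].

Definition geodesic (g : R -> X) (I : set R) : Prop :=
  is_interval I /\ I !=set0 /\
  forall s t, I s -> I t -> d (g s) (g t) = `|s - t|.

Definition geodesic_space : Prop :=
  forall x y : X, exists (g : R -> X) (a b : R),
    a <= b /\ geodesic g `[a, b] /\ g a = x /\ g b = y.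

(* Q-quasi-geodesic = (Q,Q)-quasi-isometric embedding of [a,b] *)
Definition quasi_geodesic (Q : R) (q : R -> X) (a b : R) : Prop :=
  a <= b /\ forall s t, a <= s <= b -> a <= t <= b ->
    `|s - t| / Q - Q <= d (q s) (q t) /\ d (q s) (q t) <= Q * `|s - t| + Q.

Definition dist_set (x : X) (A : set X) : R := inf [set d x a | a in A].

Definition closed_nbhd (r : R) (A : set X) : set X :=
  [set p | dist_set p A <= r].

Definition morse_gauge (M : R -> R) : Prop :=
  (forall Q, 1 <= Q -> 0 <= M Q) /\
  (forall Q Q', 1 <= Q -> Q <= Q' -> M Q <= M Q') /\
  {within `[1, +oo[%classic, continuous M}.

Definition morse (M : R -> R) (g : R -> X) (I : set R) : Prop :=
  forall s t, I s -> I t -> s <= t ->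
  forall Q, 1 <= Q ->
  forall (q : R -> X) (a b : R), quasi_geodesic Q q a b ->
    q a = g s -> q b = g t ->
    forall u, a <= u <= b -> closed_nbhd (M Q) (g @` `[s, t]) (q u).

Definition cproj (g : R -> X) (I : set R) (y : X) : set X :=
  [set p | (g @` I) p /\ d y p = dist_set y (g @` I)].

(* C-contracting: projection of the (open) ball B_{d(x,g)}(x) has diameter <= C *)
Definition contracting (C : R) (g : R -> X) (I : set R) : Prop :=
  forall x y1 y2 p1 p2,
    d x y1 < dist_set x (g @` I) -> d x y2 < dist_set x (g @` I) ->
    cproj g I y1 p1 -> cproj g I y2 p2 -> d p1 p2 <= C.

Definition morse_dichotomous : Prop :=
  forall M, morse_gauge M -> exists C : R,
    forall g I, geodesic g I -> morse M g I -> contracting C g I.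

Definition geodesic_ray_from (x0 : X) (g : R -> X) : Prop :=
  geodesic g `[0, +oo[ /\ g 0 = x0.

Definition morse_ray_from (x0 : X) (g : R -> X) : Prop :=
  geodesic_ray_from x0 g /\ exists M, morse_gauge M /\ morse M g `[0, +oo[.

Definition hausdorff_bounded (A B : set X) : Prop :=
  exists K : R,
    (forall a, A a -> exists2 b, B b & d a b <= K) /\
    (forall b, B b -> exists2 a, A a & d a b <= K).

Definition ray_class (x0 : X) (g : R -> X) : set (R -> X) :=
  [set g' | morse_ray_from x0 g' /\
            hausdorff_bounded (g @` `[0, +oo[) (g' @` `[0, +oo[)].

Definition morse_boundary (x0 : X) : set (set (R -> X)) :=
  ray_class x0 @` morse_ray_from x0.

Definition morse_boundary_M (x0 : X) (M : R -> R) : set (set (R -> X)) :=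
  ray_class x0 @` [set g | geodesic_ray_from x0 g /\ morse M g `[0, +oo[].

Definition strongly_sigma_compact (x0 : X) : Prop :=
  exists Ms : nat -> R -> R,
    (forall n, morse_gauge (Ms n)) /\
    (forall n Q, 1 <= Q -> Ms n Q <= Ms n.+1 Q) /\
    morse_boundary x0 = \bigcup_n morse_boundary_M x0 (Ms n) /\
    (forall M, morse_gauge M -> exists n,
        morse_boundary_M x0 M `<=` morse_boundary_M x0 (Ms n)).

End MorseDefs.

(* Main.v *)
Require Import Defs.
From HB Require Import structures.
From mathcomp Require Import all_boot all_order all_algebra.
From mathcomp Require Import all_classical all_reals all_analysis.
From mathcomp Require Import lra.
Set Implicit Arguments. Unset Strict Implicit. Unset Printing Implicit Defensive.
Import Order.TTheory GRing.Theory Num.Theory.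
Import numFieldNormedType.Exports.
Local Open Scope classical_set_scope.
Local Open Scope ring_scope.

From mathcomp Require Import zify.

Lemma max_witness (P : pred nat) m : P 0%N ->
  exists j, [/\ (j <= m)%N, P j & forall k, (j < k)%N -> (k <= m)%N -> ~~ P k].
Proof.
move=> P0.
have ex : exists j, (j <= m)%N && P j by exists 0%N; rewrite leq0n.
have ub : forall j, (j <= m)%N && P j -> (j <= m)%N by move=> j /andP [].
case: (ex_maxnP ex ub) => j /andP [jm Pj] jmax.
exists j; split => // k jk km; apply/negP => Pk.
by have := jmax k; rewrite km Pk => /(_ isT); rewrite leqNgt jk.
Qed.

Lemma min_witness (P : pred nat) i N : (i <= N)%N -> P N ->
  exists k, [/\ (i <= k)%N, (k <= N)%N, P k & forall m, (i <= m)%N -> (m < k)%N -> ~~ P m].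
Proof.
move=> iN PN.
have ex : exists k, [&& (i <= k)%N, (k <= N)%N & P k] by exists N; rewrite iN leqnn PN.
case: (ex_minnP ex) => k /and3P [ik kN Pk] kmin.
exists k; split => // m im mk; apply/negP => Pm.
have := kmin m; rewrite im Pm (leq_trans (ltnW mk) kN) => /(_ isT).
by rewrite leqNgt mk.
Qed.

Section Proj.
Context {R : realType} {X : metricType R}.
Local Notation d := (@mdist R X).

Lemma dtri (x y z : X) : d x z <= d x y + d y z.
Proof. exact: metric_triangle. Qed.
Lemma dsym (x y : X) : d x y = d y x.
Proof. exact: metric_sym. Qed.
Lemma dge0 (x y : X) : 0 <= d x y.
Proof. exact: mdist_ge0. Qed.
Lemma dxx (x : X) : d x x = 0.
Proof. exact: mdistxx. Qed.

Lemma dist_set_lb (x : X) (A : set X) a : A a -> dist_set x A <= d x a.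
Proof.
move=> Aa; rewrite /dist_set; apply: ge_inf; last by exists a.
by exists 0 => _ [b _ <-]; exact: dge0.
Qed.

Lemma dist_set_ge0 (x : X) (A : set X) : A !=set0 -> 0 <= dist_set x A.
Proof.
move=> [a Aa]; rewrite /dist_set; apply: lb_le_inf; first by exists (d x a), a.
by move=> _ [b _ <-]; exact: dge0.
Qed.

Variable g : R -> X.
Hypothesis gi : forall s t, 0 <= s -> 0 <= t -> d (g s) (g t) = `|s - t|.

Local Notation I0 := (`[0, +oo[%classic : set R).

Lemma I0P r : I0 r <-> 0 <= r.
Proof. by rewrite /= in_itv /= andbT. Qed.

Lemma dist_set_ray_lb y r : 0 <= r -> dist_set y (g @` I0) <= d y (g r).
Proof. by move=> r0; apply: dist_set_lb; exists r => //; apply/I0P. Qed.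

Definition pos (r : R) := if 0 <= r then r else 0.
Lemma pos_ge0 r : 0 <= pos r.
Proof. by rewrite /pos; case: ifP. Qed.

Lemma maxlip (a b : R) : `|pos a - pos b| <= `|a - b|.
Proof.
rewrite /pos; case: (lerP 0 a) => ha; case: (lerP 0 b) => hb //.
- rewrite subr0 !ger0_norm //; lra.
- rewrite sub0r normrN ger0_norm // ler0_norm; lra.
- by rewrite subrr normr0.
Qed.

Lemma proj_ex y : exists r, 0 <= r /\ d y (g r) = dist_set y (g @` I0).
Proof.
pose f r := d y (g (pos r)).
have fc : continuous f.
  move=> r; apply/cvgrPdist_lt => e e0.
  apply/nbhs_normP; exists e => // r' /= hr.
  have H1 := dtri y (g (pos r)) (g (pos r')).
  have H2 := dtri y (g (pos r')) (g (pos r)).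
  rewrite gi ?pos_ge0 // in H1.
  rewrite gi ?pos_ge0 // distrC in H2.
  have hm : `|pos r - pos r'| <= `|r - r'| by apply: maxlip.
  rewrite real_ltr_norml ?num_real //; apply/andP; split.
    rewrite /f; move: hr; rewrite /ball_ /= => hr. lra.
  rewrite /f; move: hr => /= hr. lra.
have [c c0 cmin] := @EVT_min R f 0 (2 * d y (g 0)) ltac:(by rewrite mulr_ge0 ?dge0) (continuous_subspaceT fc).
move: c0; rewrite in_itv /= => /andP [c0 c1].
have fE r : 0 <= r -> f r = d y (g r) by move=> r0; rewrite /f /pos r0.
have key : forall r, 0 <= r -> d y (g c) <= d y (g r).
  move=> r r0; rewrite -fE // -fE //.
  case: (lerP r (2 * d y (g 0))) => hr.
    by apply: cmin; rewrite in_itv /= r0 hr.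
  apply: (le_trans (cmin 0 _)); first by rewrite in_itv /= lexx mulr_ge0 ?dge0.
  rewrite fE ?lexx // fE //.
  have := dtri (g 0) y (g r); rewrite gi ?lexx // sub0r normrN ger0_norm // dsym.
  lra.
exists c; split => //; apply/eqP; rewrite eq_le; apply/andP; split; last first.
  exact: dist_set_ray_lb.
rewrite /dist_set; apply: lb_le_inf; first by exists (d y (g c)), (g c) => //; exists c => //; apply/I0P.
by move=> _ [_ [r /I0P r0 <-] <-]; apply: key.
Qed.


Variable K : R.
Hypothesis K1 : 1 <= K.
Hypothesis gc : contracting K g I0.

Definition del y := dist_set y (g @` I0).
Definition rho y := projT1 (cid (proj_ex y)).
Lemma rho_ge0 y : 0 <= rho y.
Proof. by rewrite /rho; case: cid => r [] /=. Qed.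
Lemma rhoE y : d y (g (rho y)) = del y.
Proof. by rewrite /rho; case: cid => r [] /=. Qed.
Lemma del_lb y r : 0 <= r -> del y <= d y (g r).
Proof. exact: dist_set_ray_lb. Qed.
Lemma del_ge0 y : 0 <= del y.
Proof. by rewrite -rhoE dge0. Qed.
Lemma del_lip y z : del y <= d y z + del z.
Proof.
apply: (le_trans (del_lb y (rho_ge0 z))); rewrite -rhoE; exact: dtri.
Qed.
Lemma rho_close y z : `|rho y - rho z| <= del y + d y z + del z.
Proof.
rewrite -gi ?rho_ge0 // -!rhoE.
have h1 := dtri (g (rho y)) y (g (rho z)).
have h2 := dtri y z (g (rho z)).
rewrite (dsym (g (rho y)) y) in h1; lra.
Qed.
Lemma rho_contr y z S : d y z <= S -> S < del y -> `|rho y - rho z| <= K.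
Proof.
move=> h1 h2; rewrite -gi ?rho_ge0 //.
apply: (gc (x := y) (y1 := y) (y2 := z)).
- by rewrite dxx; apply: le_lt_trans h2; apply: le_trans (dge0 y z) h1.
- exact: le_lt_trans h1 h2.
- split; first by exists (rho y) => //; apply/I0P; apply: rho_ge0.
  by rewrite rhoE.
- split; first by exists (rho z) => //; apply/I0P; apply: rho_ge0.
  by rewrite rhoE.
Qed.
Lemma del_g s : 0 <= s -> del (g s) = 0.
Proof.
move=> s0; apply/eqP; rewrite eq_le del_ge0 andbT.
by have := del_lb (g s) s0; rewrite dxx.
Qed.
Lemma rho_g s : 0 <= s -> rho (g s) = s.
Proof.
move=> s0; apply/eqP; rewrite -subr_eq0 -normr_eq0 -gi ?rho_ge0 //.
by rewrite dsym rhoE del_g.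
Qed.


Lemma d_via_rho y z : d y z <= del y + `|rho y - rho z| + del z.
Proof.
rewrite -gi ?rho_ge0 // -!rhoE.
have h1 := dtri y (g (rho y)) z.
have h2 := dtri (g (rho y)) (g (rho z)) z.
rewrite (dsym (g (rho z)) z) in h2; lra.
Qed.

Section Seq.
Variables (x : nat -> X) (N : nat) (s t S c c0 : R).
Hypotheses (s0 : 0 <= s) (st : s <= t) (x0E : x 0%N = g s) (xNE : x N = g t)
 (S0 : 0 <= S) (c00 : 0 <= c0) (cK : 2 * K <= c)
 (step : forall i, (i < N)%N -> d (x i) (x i.+1) <= S)
 (lower : forall i j, (i <= j)%N -> (j <= N)%N -> (j - i)%:R * c - c0 <= d (x i) (x j)).

Ltac hyps := have s0' : 0 <= s := s0; have st' : s <= t := st; have S0' : 0 <= S := S0;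
  have c00' : 0 <= c0 := c00; have cK' : 2 * K <= c := cK; have K1' : 1 <= K := K1.

Lemma chain i j : (i <= j)%N -> (j <= N)%N -> d (x i) (x j) <= (j - i)%:R * S.
Proof.
elim: j => [|j IH].
  by rewrite leqn0 => /eqP -> _; rewrite dxx subnn mul0r.
rewrite leq_eqVlt => /orP [/eqP -> _|ij jN]; first by rewrite dxx subnn mul0r.
have h1 := IH ij (ltnW jN).
have h2 := step jN.
have h3 := dtri (x i) (x j) (x j.+1).
rewrite subSn // -natr1; lra.
Qed.

Lemma chain_rho j k : (forall m, (j <= m)%N -> (m < k)%N -> S < del (x m)) ->
  (k <= N)%N -> (j <= k)%N -> `|rho (x j) - rho (x k)| <= (k - j)%:R * K.
Proof.
elim: k => [|k IH] hm.
  by move=> _; rewrite leqn0 => /eqP ->; rewrite subrr normr0 subnn mul0r.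
move=> kN; rewrite leq_eqVlt => /orP [/eqP ->|jk]; first by rewrite subrr normr0 subnn mul0r.
have h1 := IH (fun m jm mk => hm m jm (ltnW mk)) (ltnW kN) jk.
have h2 := rho_contr (step kN) (hm k jk (ltnSn k)).
have h3 : `|rho (x j) - rho (x k.+1)| <= `|rho (x j) - rho (x k)| + `|rho (x k) - rho (x k.+1)|.
  by rewrite -[X in `|X|](subrKA (rho (x k))) ler_normD.
rewrite subSn // -natr1; lra.
Qed.

Definition DA := S + (4 * S + c0 + 1) * S.

Lemma DA_ge0 : S <= DA.
Proof.
rewrite /DA; have h : 0 <= (4 * S + c0 + 1) * S.
  apply: mulr_ge0 => //. have h1 : 0 <= S := S0. have h2 : 0 <= c0 := c00. lra.
lra.
Qed.

Lemma partA i : (i <= N)%N -> del (x i) <= DA.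
Proof.
hyps.
move=> iN; have hDA := DA_ge0.
case: (lerP (del (x i)) S) => hi; first lra.
have P0 : del (x 0%N) <= S by rewrite x0E del_g.
have [j [ji Pj jmax]] := max_witness (P := fun m => del (x m) <= S) i P0.
have PN : del (x N) <= S by rewrite xNE del_g // (le_trans s0 st).
have [k [ik kN Pk kmin]] := min_witness (P := fun m => del (x m) <= S) iN PN.
have jli : (j < i)%N by rewrite ltn_neqAle ji andbT; apply/eqP => eji; move: Pj; rewrite eji leNgt hi.
have ilk : (i < k)%N by rewrite ltn_neqAle ik andbT; apply/eqP => eik; move: Pk; rewrite -eik leNgt hi.
have hm : forall m, (j < m)%N -> (m < k)%N -> S < del (x m).
  move=> m jm mk; case: (leqP m i) => mi.
    by have := jmax m jm mi; rewrite -ltNge.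
  by have := kmin m (ltnW mi) mk; rewrite -ltNge.
case: k ik kN Pk kmin ilk hm => [|k'] //= ik kN Pk kmin ilk hm.
have ik' : (i <= k')%N by [].
have jk' : (j.+1 <= k')%N := leq_trans jli ik'.
have kN' : (k' <= N)%N := ltnW kN.
have hr := chain_rho (j := j.+1) (k := k') (fun m jm mk => hm m jm (ltn_trans mk (ltnSn k'))) kN' jk'.
have hd := d_via_rho (x j.+1) (x k').
have hlo := lower jk' kN'.
have e1 := del_lip (x j.+1) (x j).
have e2 := step (leq_trans jli (leq_trans ik' kN')).
rewrite dsym in e2.
have e3 := del_lip (x k') (x k'.+1).
have e4 := step kN.
have e5 := del_lip (x i) (x j).
have e6 := chain ji iN.
rewrite dsym in e6.
have hij0 : (i - j <= (k' - j.+1).+1)%N by clear -ik' jli; lia.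
have hij : ((i - j)%:R : R) <= (k' - j.+1)%:R + 1 by rewrite natr1 ler_nat.
set n := ((k' - j.+1)%:R : R) in hr hlo hij.
have n0 : 0 <= n by rewrite /n ler0n.
have a1 : n * (2 * K) <= n * c by apply: ler_wpM2l.
have a2 : n * 1 <= n * K by apply: ler_wpM2l.
have hnK : n * K <= 4 * S + c0.
  lra.
have hn : n <= 4 * S + c0.
  lra.
have : (i - j)%:R * S <= (4 * S + c0 + 1) * S by apply: ler_wpM2r => //; lra.
rewrite /DA. move=> hh. lra.
Qed.

Definition DB := DA + (3 * DA + S + c0) * S.

Lemma partB i : (i <= N)%N -> exists2 r, s <= r <= t & d (x i) (g r) <= DB.
Proof.
hyps.
move=> iN; have hDA := DA_ge0.
have hA : forall m, (m <= N)%N -> del (x m) <= DA by move=> m; apply: partA.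
have hE0 : 0 <= (3 * DA + S + c0) * S by apply: mulr_ge0 => //; lra.
have c1 : 1 <= c by lra.
have rhoclose : forall m, (m < N)%N -> `|rho (x m) - rho (x m.+1)| <= 2 * DA + S.
  move=> m mN; have h1 := rho_close (x m) (x m.+1).
  have h2 := hA m (ltnW mN); have h3 := hA m.+1 mN; have h4 := step mN; lra.
case: (lerP (rho (x i)) t) => hit; first case: (lerP s (rho (x i))) => hsi.
- exists (rho (x i)); first by rewrite hsi hit.
  rewrite rhoE /DB; have h1 := hA i iN; lra.
-
  have PN : s <= rho (x N) by rewrite xNE rho_g // (le_trans s0 st).
  have [k [ik kN Pk kmin]] := min_witness (P := fun m => s <= rho (x m)) iN PN.
  have ilk : (i < k)%N by rewrite ltn_neqAle ik andbT; apply/eqP => eik; move: Pk; rewrite -eik leNgt hsi.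
  case: k ik kN Pk kmin ilk => [|k'] // ik kN Pk kmin ilk.
  have ik' : (i <= k')%N by [].
  have hk' : rho (x k') < s by have := kmin k' ik' (ltnSn k'); rewrite -ltNge.
  have hc := rhoclose k' kN.
  have hd : d (x k'.+1) (g s) <= del (x k'.+1) + (rho (x k'.+1) - s).
    rewrite -rhoE; have h1 := dtri (x k'.+1) (g (rho (x k'.+1))) (g s).
    by rewrite gi ?rho_ge0 // ger0_norm // in h1; lra.
  have hlo := lower (leq0n k'.+1) kN.
  rewrite x0E subn0 dsym in hlo.
  have e1 := hA k'.+1 kN.
  exists s; first by rewrite lexx st.
  have hch := chain (leq0n i) (leq_trans ik' (ltnW kN)).
  rewrite x0E subn0 dsym in hch.
  have hik : (i%:R : R) <= k'.+1%:R by rewrite ler_nat; apply: ltnW.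
  set kk := (k'.+1%:R : R) in hlo hik.
  have hk0 : 0 <= kk by rewrite /kk ler0n.
  have a1 : kk * 1 <= kk * c by apply: ler_wpM2l.
  have a2 : i%:R * S <= kk * S by apply: ler_wpM2r.
  have a3 : kk <= 3 * DA + S + c0.
    have h5 : `|rho (x k') - rho (x k'.+1)| >= rho (x k'.+1) - rho (x k') by rewrite distrC ler_norm.
    lra.
  have a4 : kk * S <= (3 * DA + S + c0) * S by apply: ler_wpM2r.
  rewrite /DB; lra.
-
  have P0 : rho (x 0%N) <= t by rewrite x0E rho_g.
  have [j [ji Pj jmax]] := max_witness (P := fun m => rho (x m) <= t) i P0.
  have jli : (j < i)%N by rewrite ltn_neqAle ji andbT; apply/eqP => eji; move: Pj; rewrite eji leNgt hit.
  have jN : (j < N)%N := leq_trans jli iN.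
  have hj1 : t < rho (x j.+1) by have := jmax j.+1 (ltnSn j) jli; rewrite -ltNge.
  have hc := rhoclose j jN.
  have hd : d (x j) (g t) <= del (x j) + (t - rho (x j)).
    rewrite -rhoE; have h1 := dtri (x j) (g (rho (x j))) (g t).
    by rewrite gi ?rho_ge0 ?(le_trans s0 st) // distrC ger0_norm // in h1; lra.
  have hlo := lower (ltnW jN) (leqnn N).
  rewrite xNE in hlo.
  have e1 := hA j (ltnW jN).
  exists t; first by rewrite lexx st.
  have hch := chain iN (leqnn N).
  rewrite xNE in hch.
  have hij0 : (N - i <= N - j)%N by clear -ji; lia.
  have hij : ((N - i)%:R : R) <= (N - j)%:R by rewrite ler_nat.
  set kk := ((N - j)%:R : R) in hlo hij.
  have hk0 : 0 <= kk by rewrite /kk ler0n.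
  have a1 : kk * 1 <= kk * c by apply: ler_wpM2l.
  have a2 : (N - i)%:R * S <= kk * S by apply: ler_wpM2r.
  have a3 : kk <= 3 * DA + S + c0.
    have h5 : `|rho (x j) - rho (x j.+1)| >= rho (x j.+1) - rho (x j) by rewrite distrC ler_norm.
    lra.
  have a4 : kk * S <= (3 * DA + S + c0) * S by apply: ler_wpM2r.
  rewrite /DB; lra.
Qed.

End Seq.

End Proj.

Section Gauge.
Context {R : realType}.

Definition Sg (K Q : R) := 2 * K * (Q * Q) + Q.
Definition c0g (K Q : R) := 2 * K + Q.
Definition Mg (K Q : R) := DB (Sg K Q) (c0g K Q) + Sg K Q.

Lemma DA_mono (S S' c c' : R) : 0 <= S -> S <= S' -> 0 <= c -> c <= c' -> DA S c <= DA S' c'.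
Proof.
move=> h1 h2 h3 h4; rewrite /DA.
have : (4 * S + c + 1) * S <= (4 * S' + c' + 1) * S' by apply: ler_pM => //; lra.
lra.
Qed.

Lemma DA_ge0' (S c : R) : 0 <= S -> 0 <= c -> 0 <= DA S c.
Proof.
move=> h1 h2; rewrite /DA.
have : 0 <= (4 * S + c + 1) * S by apply: mulr_ge0 => //; lra.
lra.
Qed.

Lemma DB_mono (S S' c c' : R) : 0 <= S -> S <= S' -> 0 <= c -> c <= c' -> DB S c <= DB S' c'.
Proof.
move=> h1 h2 h3 h4; rewrite /DB.
have e1 := DA_mono h1 h2 h3 h4.
have e2 := DA_ge0' h1 h3.
have : (3 * DA S c + S + c) * S <= (3 * DA S' c' + S' + c') * S' by apply: ler_pM => //; lra.
lra.
Qed.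

Lemma DB_ge0 (S c : R) : 0 <= S -> 0 <= c -> 0 <= DB S c.
Proof.
move=> h1 h2; rewrite /DB.
have e2 := DA_ge0' h1 h2.
have : 0 <= (3 * DA S c + S + c) * S by apply: mulr_ge0 => //; lra.
lra.
Qed.

Lemma Sg_mono (K K' Q Q' : R) : 0 <= K -> K <= K' -> 0 <= Q -> Q <= Q' -> Sg K Q <= Sg K' Q'.
Proof.
move=> h1 h2 h3 h4; rewrite /Sg.
have e1 : Q * Q <= Q' * Q' by apply: ler_pM.
have : 2 * K * (Q * Q) <= 2 * K' * (Q' * Q') by apply: ler_pM; rewrite ?mulr_ge0 //; lra.
lra.
Qed.

Lemma Sg_ge0 (K Q : R) : 0 <= K -> 0 <= Q -> 0 <= Sg K Q.
Proof. by move=> h1 h2; rewrite /Sg addr_ge0 // !mulr_ge0. Qed.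

Lemma Mg_mono (K K' Q Q' : R) : 0 <= K -> K <= K' -> 0 <= Q -> Q <= Q' -> Mg K Q <= Mg K' Q'.
Proof.
move=> h1 h2 h3 h4; rewrite /Mg.
have e1 := Sg_mono h1 h2 h3 h4.
have e2 := Sg_ge0 h1 h3.
have e3 : c0g K Q <= c0g K' Q' by rewrite /c0g; lra.
have e4 : 0 <= c0g K Q by rewrite /c0g; lra.
have := DB_mono e2 e1 e4 e3.
lra.
Qed.

Lemma contD (f h : R -> R) : continuous f -> continuous h -> continuous (fun x => f x + h x).
Proof. by move=> cf ch x; apply: cvgD; [exact: cf | exact: ch]. Qed.
Lemma contM (f h : R -> R) : continuous f -> continuous h -> continuous (fun x => f x * h x).
Proof. by move=> cf ch x; apply: cvgM; [exact: cf | exact: ch]. Qed.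
Lemma contC (k : R) : continuous (fun _ : R => k).
Proof. exact: cst_continuous. Qed.
Lemma contI : continuous (fun x : R => x).
Proof. by move=> x; exact: cvg_id. Qed.

Lemma Mg_cont (K : R) : continuous (Mg K).
Proof.
rewrite /Mg /DB /DA /Sg /c0g.
repeat first [apply: contI | apply: contC | apply: contD | apply: contM].
Qed.

Lemma Mg_gauge (n : nat) : morse_gauge (Mg (n.+1%:R : R)).
Proof.
have K0 : (0 : R) <= n.+1%:R by rewrite ler0n.
split; [|split].
- move=> Q Q1; rewrite /Mg; apply: addr_ge0; last by apply: Sg_ge0 => //; lra.
  apply: DB_ge0; first by apply: Sg_ge0 => //; lra.
  rewrite /c0g; lra.
- move=> Q Q' Q1 QQ; apply: Mg_mono => //; lra.
- apply: continuous_subspaceT; move=> x; move: (@Mg_cont (n.+1%:R) x) => H; exact H.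
Qed.

End Gauge.

Section Main.
Context {R : realType} {X : metricType R}.
Local Notation d := (@mdist R X).
Local Notation I0 := (`[0, +oo[%classic : set R).

Lemma contr_morse (g : R -> X) (n : nat) :
  geodesic g I0 -> contracting (n.+1%:R) g I0 -> morse (Mg (n.+1%:R)) g I0.
Proof.
move=> [_ [_ gi']] gc.
have gi : forall s t, 0 <= s -> 0 <= t -> d (g s) (g t) = `|s - t|.
  by move=> s t s0 t0; apply: gi'; apply/I0P.
set K : R := n.+1%:R.
have K1 : 1 <= K by rewrite /K ler1n.
move=> s t /I0P s0 /I0P t0 st Q Q1 q a b [ab qg] qa qb u /andP [au ub].
pose h := 2 * K * Q.
have h0 : 0 < h by rewrite /h !mulr_gt0 //; lra.
pose T := Num.truncn ((b - a) / h).
pose N := T.+1.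
have bah0 : 0 <= (b - a) / h by rewrite divr_ge0 //; lra.
have hT1 : T%:R * h <= b - a.
  by rewrite -ler_pdivlMr //; rewrite /T truncn_le.
have hT2 : b - a < N%:R * h.
  by rewrite -ltr_pdivrMr // /N /T truncnS_gt.
pose v (i : nat) := if a + i%:R * h <= b then a + i%:R * h else b.
have vab : forall i, a <= v i <= b.
  move=> i; have hh : 0 <= i%:R * h by rewrite mulr_ge0 ?ler0n //; lra.
  rewrite /v; case: (lerP (a + i%:R * h) b) => hi; apply/andP; split; lra.
have vle : forall i, v i <= a + i%:R * h.
  by move=> i; rewrite /v; case: (lerP (a + i%:R * h) b) => hi; lra.
pose x i := q (v i).
have qd : forall w w', a <= w <= b -> a <= w' <= b ->
    `|w - w'| / Q - Q <= d (q w) (q w') /\ d (q w) (q w') <= Q * `|w - w'| + Q.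
  by move=> w w' hw hw'; apply: qg.
have x0E : x 0%N = g s.
  by rewrite /x /v mul0r addr0 ab.
have xNE : x N = g t.
  rewrite /x /v; case: (lerP (a + N%:R * h) b) => hi; [exfalso; lra | exact: qb].
have vS : forall i, v i <= v i.+1 <= v i + h.
  move=> i; rewrite /v -natr1.
  case: (lerP (a + i%:R * h) b) => h1; case: (lerP (a + (i%:R + 1) * h) b) => h2;
    apply/andP; split; lra.
have S0 : 0 <= Sg K Q by apply: Sg_ge0; lra.
have c00 : 0 <= c0g K Q by rewrite /c0g; lra.
have cK : 2 * K <= 2 * K by [].
have step : forall i, (i < N)%N -> d (x i) (x i.+1) <= Sg K Q.
  move=> i _; have [_ hup] := qd (v i) (v i.+1) (vab i) (vab i.+1).
  have e1 : `|v i - v i.+1| <= h.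
    rewrite distrC ger0_norm; have := vS i; move=> /andP [p1 p2]; lra.
  have e2 : Q * `|v i - v i.+1| <= Q * h by apply: ler_wpM2l => //; lra.
  rewrite /Sg; rewrite /h in e2; lra.
have lower : forall i j, (i <= j)%N -> (j <= N)%N ->
    (j - i)%:R * (2 * K) - c0g K Q <= d (x i) (x j).
  move=> i j ij jN.
  have [hlo _] := qd (v i) (v j) (vab i) (vab j).
  have vi := vle i.
  have hjT : (j%:R : R) <= T%:R + 1 by rewrite natr1 ler_nat.
  have hjT' : (j%:R - 1) * h <= T%:R * h by apply: ler_wpM2r; lra.
  have cl : (j%:R - i%:R) * h - h <= v j - v i.
    case: (lerP (a + j%:R * h) b) => hj.
      have vj : v j = a + j%:R * h by rewrite /v hj.
      have hh : i%:R * h <= j%:R * h by apply: ler_wpM2r; [lra | rewrite ler_nat].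
      lra.
    have vj : v j = b by rewrite /v leNgt hj.
    lra.
  have e1 : v j - v i <= `|v i - v j| by rewrite distrC ler_norm.
  have e2 : ((j%:R - i%:R) * (2 * K) - 2 * K) * Q <= `|v i - v j| by rewrite /h in cl; lra.
  have e3 : (j%:R - i%:R) * (2 * K) - 2 * K <= `|v i - v j| / Q.
    by rewrite ler_pdivlMr //; lra.
  rewrite natrB // /c0g; lra.
pose i0 := Num.truncn ((u - a) / h).
have hu0 : 0 <= (u - a) / h by rewrite divr_ge0 //; lra.
have hi1 : i0%:R * h <= u - a by rewrite -ler_pdivlMr // /i0 truncn_le.
have hi2 : u - a < i0.+1%:R * h by rewrite -ltr_pdivrMr // /i0 truncnS_gt.
have hiT : (i0 <= T)%N.
  rewrite /i0 /T; apply: le_truncn; apply: ler_wpM2r; [rewrite invr_ge0; lra | lra].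
have i0N : (i0 <= N)%N by apply: leqW.
have vi0 : v i0 = a + i0%:R * h by rewrite /v; case: (lerP (a + i0%:R * h) b) => hh //; lra.
have hq : d (q u) (x i0) <= Sg K Q.
  have [_ hup] := qd u (v i0) (ltac:(by rewrite au ub)) (vab i0).
  have e1 : `|u - v i0| <= h by rewrite vi0 ger0_norm; rewrite -natr1 in hi2; lra.
  have e2 : Q * `|u - v i0| <= Q * h by apply: ler_wpM2l => //; lra.
  rewrite /Sg; rewrite /h in e2; lra.
have [r /andP [sr rt] hr] := partB gi K1 gc (x := x) (N := N) s0 st x0E xNE S0 c00 cK step lower i0N.
rewrite /closed_nbhd /=.
apply: le_trans (dist_set_lb (q u) (a := g r) _) _.
  by exists r => //=; rewrite in_itv /= sr rt.
have := dtri (q u) (x i0) (g r); rewrite /Mg; lra.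
Qed.
End Main.

Lemma key_lemma (R : realType) (X : metricType R) (x0 : X) :
  @morse_dichotomous R X -> forall M, morse_gauge M -> exists n : nat,
  forall g, geodesic_ray_from x0 g -> morse M g (`[0, +oo[%classic : set R) ->
  morse (Mg (n.+1%:R : R)) g `[0, +oo[%classic.
Proof.
move=> hd M hM; have [C HC] := hd M hM.
exists (Num.truncn `|C|) => g [gg _] gm.
apply: contr_morse => //.
move=> y y1 y2 p1 p2 h1 h2 h3 h4.
apply: le_trans (HC g _ gg gm y y1 y2 p1 p2 h1 h2 h3 h4) _.
apply: le_trans (ler_norm C) _.
by apply: ltW; apply: truncnS_gt.
Qed.

Unset Implicit Arguments.
Theorem corollary2p15 (R : realType) (X : metricType R) :
  @proper_space R X -> @geodesic_space R X -> @morse_dichotomous R X ->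
  forall x0 : X, strongly_sigma_compact x0.
Proof.
move=> _ _ hd x0.
exists (fun n => Mg (n.+1%:R : R)); split; [|split; [|split]].
- by move=> n; apply: Mg_gauge.
- move=> n Q Q1; apply: Mg_mono; rewrite ?ler0n ?ler_nat //; lra.
- apply/seteqP; split.
  + move=> A [g [gr [M [hM gm]]] <-].
    have [n hn] := key_lemma x0 hd hM.
    by exists n => //; exists g => //; split => //; apply: hn.
  + move=> A [n _ [g [gr gm] <-]].
    exists g => //; split => //; exists (Mg (n.+1%:R : R)); split => //.
    exact: Mg_gauge.
- move=> M hM; have [n hn] := key_lemma x0 hd hM.
  exists n => A [g [gr gm] <-]; exists g => //; split => //; exact: hn.
Qed.
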